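(* Let $\langle\mathcal{D},\sigma,\varphi\rangle$ be a hybrid temporal achievement causal setting. Then $$\mathcal{D}\models\forall\alpha_1,\alpha_2,ts_1,ts_2.\;\big(\mathit{CausesDir}^{\mathit{prim}}_{\mathit{temp}}(\alpha_1,ts_1,\varphi,\sigma)\land\mathit{PrimCause}(\alpha_2,ts_2,\varphi,\sigma)\big)\supset(\alpha_1=\alpha_2\land ts_1=ts_2).$$
   Context: Hybrid temporal situation calculus (HTSC): $S_0$ initial situation, $do(a,s)$ successor situation, $do([a_1,\dots,a_n],s)$ the nesting. $s\sqsubset s'$: $s'$ reachable from $s$ by one or more actions; $s\sqsubseteq s'$: $s\sqsubset s'\lor s=s'$. $\mathit{time}(a(\vec x,t))=t$, $\mathit{start}(do(a,s))=\mathit{time}(a)$. $\mathit{Exec}(s)\doteq\forall a,s'.(do(a,s')\sqsubseteq s\supset\mathit{Poss}(a,s')\land\mathit{start}(s')\le\mathit{time}(a))$; $s<s'$ abbreviates $s\sqsubset s'\land\mathit{Exec}(s')$; $s\le s'$ abbreviates $s<s'\lor s=s'$. $\mathit{timeStamp}(S_0)=0$, $\mathit{timeStamp}(do(a,s))=\mathit{timeStamp}(s)+1$. A hybrid basic action theory $\mathcal{D}$ contains initial-state, precondition, successor-state (discrete fluents), state evolution (temporal fluents), unique-names and foundational axioms. A temporal fluent $f$ has state evolution axiom $f(\vec x,t,s)=y\equiv[\bigvee_i(\gamma^f_i(\vec x,s)\land\delta_i(\vec x,y,t,s))\lor(y=f(\vec x,\mathit{start}(s),s)\land\neg\bigvee_i\gamma^f_i(\vec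 x,s))]$ with mutually exclusive contexts $\gamma^f_i$ (formulas over discrete fluents). An effect $\varphi$ is a situation- and time-suppressed formula, uniform in the situation, constraining the value of one primitive temporal fluent $f$; $\varphi[t,s]$ restores time $t$ and situation $s$; $\psi[s]$ restores $s$ in a situation-suppressed $\psi$. $\mathit{CausesDir}(a,ts,\psi,s)\doteq\exists s_a.\,\mathit{timeStamp}(s_a)=ts\land(S_0<do(a,s_a)\le s)\land\neg\psi[s_a]\land\forall s'.(do(a,s_a)\le s'\le s\supset\psi[s'])$. $\mathit{end}(s',s)=\mathit{start}(s')$ if $s'=s$; $=\mathit{time}(a)$ if $do(a,s')\le s$. $\mathit{AchvSitAux}(s_\varphi,\varphi,s)\doteq\varphi[\mathit{end}(s_\varphi,s),s_\varphi]\land\forall s',t.(s_\varphi<s'\le s\land\mathit{start}(s')\le t\le\mathit{end}(s',s)\supset\varphi[t,s'])$; $\mathit{AchvSit}(s_\varphi,\varphi,s)\doteq\mathit{AchvSitAux}(s_\varphi,\varphi,s)\land\neg\exists s''.(s''<s_\varphi\land\mathit{AchvSitAux}(s'',\varphi,s))$. $\mathit{CausesDir}^{\mathit{prim}}_{\mathit{temp}}(a,ts,\varphi,s)\doteq\exists s_\varphi.\,\mathit{AchvSit}(s_\varphi,\varphi,s)\land\exists i.\,\mathit{CausesDir}(a,ts,\gamma^f_i,s_\varphi)$. Direct possible contributor: $\mathit{DirPossContr}(\alpha,s_\alpha,s_\varphi,\sigma,\varphi)\doteq\exists i,ts.\,\mathit{Exec}(s_\alpha)\land\mathit{Poss}(\alpha,s_\alpha)\land\mathit{timeStamp}(s_\alpha)=ts\land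 s_\alpha<s_\varphi\le\sigma\land\neg\varphi[\mathit{time}(\alpha),s_\alpha]\land\varphi[\mathit{end}(s_\varphi,\sigma),s_\varphi]\land\mathit{CausesDir}(\alpha,ts,\gamma^f_i,s_\varphi)$. Direct actual contributor: $\mathit{DirActContr}(\alpha,s_\alpha,s_\varphi,\varphi,\sigma)\doteq\exists\sigma'.\,\mathit{DirPossContr}(\alpha,s_\alpha,s_\varphi,\sigma',\varphi)\land\sigma'\le\sigma$. Primary cause via contribution: $\mathit{PrimCause}(\alpha,ts,\varphi,\sigma)\doteq\exists s_\alpha,s_\varphi.\,\mathit{AchvSit}(s_\varphi,\varphi,\sigma)\land\mathit{timeStamp}(s_\alpha)=ts\land\mathit{DirActContr}(\alpha,s_\alpha,s_\varphi,\varphi,\sigma)$. Hybrid temporal achievement causal setting $\langle\mathcal{D},\sigma,\varphi\rangle$: $\sigma=do([\alpha_1,\dots,\alpha_n],S_0)$ ground, $n\ge1$, $\mathcal{D}\models\mathit{Exec}(\sigma)\land\neg\varphi[\mathit{start}(S_0),S_0]\land\neg\varphi[\mathit{time}(\alpha_1),S_0]\land\varphi[\mathit{start}(\sigma),\sigma]$. *)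

(* Defs.v *)
From Stdlib Require Import Reals List.
Open Scope R_scope.
Set Implicit Arguments.

(* Situations: the (unique, up to isomorphism) model of the foundational
   axioms over an action domain A: the tree generated by S0 and do. *)
Inductive sit (A : Type) : Type :=
| S0 : sit A
| Do : A -> sit A -> sit A.
Arguments S0 {A}.

Fixpoint doL (A : Type) (l : list A) (s : sit A) : sit A :=
  match l with
  | nil => s
  | a :: l' => doL l' (Do a s)
  end.

Definition startf (A : Type) (time : A -> R) (start0 : R) (s : sit A) : R :=
  match s with
  | S0 => start0
  | Do a _ => time a
  end.

Fixpoint timeStamp (A : Type) (s : sit A) : nat :=
  match s with
  | S0 => 0%nat
  | Do _ s' => S (timeStamp s')
  end.

Inductive sub (A : Type) (s : sit A) : sit A -> Prop :=
| sub_one : forall a, sub s (Do a s)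
| sub_step : forall a s', sub s s' -> sub s (Do a s').

Definition subeq (A : Type) (s s' : sit A) : Prop := sub s s' \/ s = s'.

(* A hybrid basic action theory, seen through one of its models:
   actions, the value sort of the primitive temporal fluent f (with its
   object arguments fixed), the contexts gamma_i of f's state evolution
   axiom (finitely many, mutually exclusive, formulas over discrete fluents),
   and the state evolution axiom itself. *)
Record HBAT : Type := {
  act : Type;
  val : Type;
  ctx : Type;
  time : act -> R;
  Poss : act -> sit act -> Prop;
  start0 : R;
  gamma : ctx -> sit act -> Prop;
  delta : ctx -> val -> R -> sit act -> Prop;
  fl : R -> sit act -> val;
  ctx_finite : exists l : list ctx, forall i, In i l;
  ctx_excl : forall i j s, gamma i s -> gamma j s -> i = j;
  sea : forall t s y,
      fl t s = y <->
      ((exists i, gamma i s /\ delta i y t s) \/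
       (y = fl (startf time start0 s) s /\ ~ (exists i, gamma i s)))
}.

Section Defs.
Variable D : HBAT.
Notation A := (act D).
Notation S := (sit (act D)).
Notation start := (startf (time D) (start0 D)).

Definition Exec (s : S) : Prop :=
  forall a s', subeq (Do a s') s -> Poss D a s' /\ start s' <= time D a.

Definition slt (s s' : S) : Prop := sub s s' /\ Exec s'.
Definition sle (s s' : S) : Prop := slt s s' \/ s = s'.

(* An effect phi constrains the value of f: phi[t,s] := Phi (f(t,s)). *)
Definition holds (Phi : val D -> Prop) (t : R) (s : S) : Prop := Phi (fl D t s).

Definition CausesDir (a : A) (ts : nat) (psi : S -> Prop) (s : S) : Prop :=
  exists sa, timeStamp sa = ts /\ slt S0 (Do a sa) /\ sle (Do a sa) s /\
    ~ psi sa /\ (forall s', sle (Do a sa) s' -> sle s' s -> psi s').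

(* end(s', s) as a (partial, functional) relation: t = end(s', s). *)
Definition EndRel (s' s : S) (t : R) : Prop :=
  (s' = s /\ t = start s) \/ (exists a, sle (Do a s') s /\ t = time D a).

Definition AchvSitAux (sphi : S) (Phi : val D -> Prop) (s : S) : Prop :=
  (exists t, EndRel sphi s t /\ holds Phi t sphi) /\
  (forall s' t e, slt sphi s' -> sle s' s -> EndRel s' s e ->
     start s' <= t <= e -> holds Phi t s').

Definition AchvSit (sphi : S) (Phi : val D -> Prop) (s : S) : Prop :=
  AchvSitAux sphi Phi s /\ ~ (exists s'', slt s'' sphi /\ AchvSitAux s'' Phi s).

Definition CausesDirPrimTemp (a : A) (ts : nat) (Phi : val D -> Prop) (s : S)
  : Prop :=
  exists sphi, AchvSit sphi Phi s /\ exists i, CausesDir a ts (gamma D i) sphi.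

Definition DirPossContr (al : A) (sal sphi sig : S) (Phi : val D -> Prop)
  : Prop :=
  exists i ts, Exec sal /\ Poss D al sal /\ timeStamp sal = ts /\
    slt sal sphi /\ sle sphi sig /\ ~ holds Phi (time D al) sal /\
    (exists t, EndRel sphi sig t /\ holds Phi t sphi) /\
    CausesDir al ts (gamma D i) sphi.

Definition DirActContr (al : A) (sal sphi : S) (Phi : val D -> Prop) (sig : S)
  : Prop :=
  exists sig', DirPossContr al sal sphi sig' Phi /\ sle sig' sig.

Definition PrimCause (al : A) (ts : nat) (Phi : val D -> Prop) (sig : S) : Prop :=
  exists sal sphi, AchvSit sphi Phi sig /\ timeStamp sal = ts /\
    DirActContr al sal sphi Phi sig.

(* <D, sigma, phi> with sigma = do([a1 :: rest], S0), n >= 1. *)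
Definition CausalSetting (Phi : val D -> Prop) (a1 : A) (rest : list A) : Prop :=
  let sig := doL (a1 :: rest) S0 in
  Exec sig /\ ~ holds Phi (start S0) S0 /\ ~ holds Phi (time D a1) S0 /\
  holds Phi (start sig) sig.

End Defs.

(* Main.v *)
Require Import Defs.
From Stdlib Require Import Reals List Lia.

Section H.
Variable D : HBAT.
Notation S := (sit (act D)).

Lemma sub_trans (x y z : S) : sub x y -> sub y z -> sub x z.
Proof. intros H1 H2; induction H2; [constructor 2; auto | constructor 2; auto]. Qed.

Lemma subeq_trans (x y z : S) : subeq x y -> subeq y z -> subeq x z.
Proof.
  unfold subeq; intros [H1|H1] [H2|H2]; subst; auto.
  left; eapply sub_trans; eauto.
Qed.

Lemma sub_ts (x y : S) : sub x y -> (timeStamp x < timeStamp y)%nat.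
Proof. induction 1; simpl; lia. Qed.

Lemma sub_Do_inv (x : S) a y : sub x (Do a y) -> subeq x y.
Proof. intro H; inversion H; subst; [right|left]; auto. Qed.

Lemma sub_S0 (x : S) : ~ sub x S0.
Proof. intro H; inversion H. Qed.

Lemma comparable (z x y : S) : subeq x z -> subeq y z -> subeq x y \/ subeq y x.
Proof.
  revert x y; induction z as [|a z IH]; intros x y Hx Hy.
  - destruct Hx as [Hx|Hx]; [exfalso; eapply sub_S0; eauto|].
    destruct Hy as [Hy|Hy]; [exfalso; eapply sub_S0; eauto|]. subst; left; right; auto.
  - assert (Cx : x = Do a z \/ subeq x z).
    { destruct Hx as [Hx|Hx]; [right; eapply sub_Do_inv; eauto | left; auto]. }
    assert (Cy : y = Do a z \/ subeq y z).
    { destruct Hy as [Hy|Hy]; [right; eapply sub_Do_inv; eauto | left; auto]. }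
    destruct Cx as [->|Cx]; destruct Cy as [->|Cy].
    + left; right; auto.
    + right; eapply subeq_trans; [exact Cy| left; constructor].
    + left; eapply subeq_trans; [exact Cx| left; constructor].
    + apply IH; auto.
Qed.

Lemma exec_pre (x y : S) : subeq x y -> Exec D y -> Exec D x.
Proof. intros H E a s' H'; apply E; eapply subeq_trans; eauto. Qed.

Lemma sle_subeq (x y : S) : sle D x y -> subeq x y.
Proof. intros [[H _]|H]; [left|right]; auto. Qed.

Lemma subeq_sle (x y : S) : subeq x y -> Exec D y -> sle D x y.
Proof. intros [H|H] E; [left; split|right]; auto. Qed.

Lemma endrel_subeq (x y : S) t : EndRel D x y t -> subeq x y.
Proof.
  intros [[-> _]|[a [H _]]]; [right; auto|].
  eapply subeq_trans; [left; constructor| apply sle_subeq; eauto].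
Qed.

Lemma achv_subeq Phi (x y : S) : AchvSit D x Phi y -> subeq x y.
Proof. intros [[[t [H _]] _] _]; eapply endrel_subeq; eauto. Qed.

Lemma achv_unique Phi (x1 x2 sig : S) : Exec D sig ->
  AchvSit D x1 Phi sig -> AchvSit D x2 Phi sig -> x1 = x2.
Proof.
  intros E H1 H2.
  pose proof (@achv_subeq Phi _ _ H1) as S1. pose proof (@achv_subeq Phi _ _ H2) as S2.
  destruct (comparable _ _ _ S1 S2) as [[C|C]|[C|C]]; auto.
  - exfalso. apply (proj2 H2). exists x1. split; [split; auto; eapply exec_pre; eauto|apply H1].
  - exfalso. apply (proj2 H1). exists x2. split; [split; auto; eapply exec_pre; eauto|apply H2].
Qed.

Lemma cd_half a1 a2 i (sa1 sa2 sphi : S) : Exec D sphi ->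
  sle D (Do a1 sa1) sphi -> sle D (Do a2 sa2) sphi ->
  (forall s', sle D (Do a1 sa1) s' -> sle D s' sphi -> gamma D i s') ->
  ~ gamma D i sa2 -> sub (Do a1 sa1) (Do a2 sa2) -> False.
Proof.
  intros E L1 L2 H1 N C.
  apply sub_Do_inv in C.
  assert (Sa : subeq sa2 sphi).
  { eapply subeq_trans; [left; constructor| apply sle_subeq; eauto]. }
  apply N, H1.
  - apply subeq_sle; auto. eapply exec_pre; eauto.
  - apply subeq_sle; auto.
Qed.

Lemma cd_unique a1 t1 a2 t2 i j (sphi : S) : Exec D sphi ->
  CausesDir D a1 t1 (gamma D i) sphi -> CausesDir D a2 t2 (gamma D j) sphi ->
  a1 = a2 /\ t1 = t2.
Proof.
  intros E [sa1 [T1 [_ [L1 [N1 H1]]]]] [sa2 [T2 [_ [L2 [N2 H2]]]]].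
  assert (i = j).
  { apply (ctx_excl D i j sphi); [apply H1 | apply H2]; auto; right; auto. }
  subst j.
  destruct (comparable _ _ _ (sle_subeq _ _ L1) (sle_subeq _ _ L2)) as [[C|C]|[C|C]].
  - exfalso; eapply cd_half; [ | exact L1 | exact L2 | exact H1 | exact N2 | exact C ]; auto.
  - injection C; intros; subst; auto.
  - exfalso; eapply cd_half; [ | exact L2 | exact L1 | exact H2 | exact N1 | exact C ]; auto.
  - injection C; intros; subst; auto.
Qed.
End H.

Theorem theorem6p4 :
  forall (D : HBAT) (Phi : val D -> Prop) (a1 : act D) (rest : list (act D)),
    CausalSetting D Phi a1 rest ->
    forall (al1 al2 : act D) (ts1 ts2 : nat),
      CausesDirPrimTemp D al1 ts1 Phi (doL (a1 :: rest) S0) /\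
      PrimCause D al2 ts2 Phi (doL (a1 :: rest) S0) ->
      al1 = al2 /\ ts1 = ts2.
Proof.
  intros D Phi a1 rest [E _] al1 al2 ts1 ts2 [[sp1 [A1 [i C1]]] P].
  destruct P as [sal [sp2 [A2 [T [sig' [DP _]]]]]].
  destruct DP as [j [ts [_ [_ [Tt [_ [_ [_ [_ C2]]]]]]]]].
  pose proof (achv_unique _ _ _ _ _ E A1 A2); subst sp2.
  assert (Ep : Exec D sp1) by (eapply exec_pre; [eapply achv_subeq; exact A1| exact E]).
  destruct (cd_unique _ _ _ _ _ _ _ _ Ep C1 C2) as [-> ->]. subst; auto.
Qed.
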